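(* Let $(\{\mathcal{I}_i\}_{i=1}^k,Q,W)$ be a weighted stochastic block model on $[n]$ ($n>k$) with $B=Q\odot W$, and suppose there are $\rho\ge1$ and $\Delta>0$ with $\max_i|\mathcal{I}_i|/\min_i|\mathcal{I}_i|\le\rho$ and $\min_iB_{ii}-2\rho\max_i\sum_{j\ne i}B_{ij}\ge\Delta$. Let $A_{\mathrm{blk}}=P_{\{\mathcal{I}_i\}}BP_{\{\mathcal{I}_i\}}^T$ and $L_{\mathrm{blk}}=\mathrm{diag}\{A_{\mathrm{blk}}\mathbf{1}_n\}-A_{\mathrm{blk}}$. Let $n_{\min}=\min_i|\mathcal{I}_i|$ and $b_{\min}=\min_i[B\mathbf{1}_k]_i$. Then: (1) $L_{\mathrm{blk}}$ is $k$-block-ideal (with respect to $\{\mathcal{I}_i\}_{i=1}^k$); (2) $\lambda_{k+1}(L_{\mathrm{blk}})\ge b_{\min}n_{\min}$; (3) $\lambda_{k+1}(L_{\mathrm{blk}})-\lambda_k(L_{\mathrm{blk}})\ge\Delta n_{\min}$.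
   Context: Weighted stochastic block model $(\{\mathcal{I}_i\}_{i=1}^k,Q,W)$: $\{\mathcal{I}_i\}$ a $k$-way partition of $[n]$, $Q\in[0,1]^{k\times k}$ and $W\in\mathbb{R}_{\ge0}^{k\times k}$ symmetric; adjacency entries $A_{ij}=A_{ji}$ equal $W_{(i),(j)}$ with probability $Q_{(i),(j)}$ and $0$ otherwise, independently for $i\ge j$, where $(j)=i$ iff $j\in\mathcal{I}_i$. Thus $A_{\mathrm{blk}}$ is the expected adjacency matrix (as printed). $\odot$ is the Hadamard product; $P_{\{\mathcal{I}_i\}}=[\mathbf{1}_{\mathcal{I}_1}\ \cdots\ \mathbf{1}_{\mathcal{I}_k}]$ with $\mathbf{1}_\mathcal{I}$ the indicator vector of $\mathcal{I}$. $\lambda_i(\cdot)$ denotes the $i$-th smallest eigenvalue. A Laplacian $L$ is $k$-block-ideal with respect to $\{\mathcal{I}_i\}$ if there is an invertible $S\in\mathbb{R}^{k\times k}$ with $[v_1(L)\ \cdots\ v_k(L)]=P_{\{\mathcal{I}_i\}}S$, where $v_1(L),\dots,v_k(L)$ are orthonormal eigenvectors for the $k$ smallest eigenvalues of $L$. *)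

(* Defs.v *)
From HB Require Import structures.
From mathcomp Require Import all_boot all_order all_algebra.
From mathcomp Require Import reals.
Set Implicit Arguments. Unset Strict Implicit. Unset Printing Implicit Defensive.
Import Order.TTheory GRing.Theory Num.Theory.
Local Open Scope ring_scope.

Section Defs.
Variable R : realType.

Definition seqmin (s : seq R) : R := foldr Num.min (head 0 s) s.
Definition seqmax (s : seq R) : R := foldr Num.max (head 0 s) s.

Definition ordmin (k : nat) (f : 'I_k -> R) : R := seqmin [seq f i | i <- enum 'I_k].
Definition ordmax (k : nat) (f : 'I_k -> R) : R := seqmax [seq f i | i <- enum 'I_k].

(* A k-way partition {I_i} of [n] is given by the labelling lab : j |-> (j),
   with I_i = [set j | lab j == i]. *)
Definition block (n k : nat) (lab : 'I_n -> 'I_k) (i : 'I_k) : {set 'I_n} :=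
  [set j | lab j == i].

Definition partmx (n k : nat) (lab : 'I_n -> 'I_k) : 'M[R]_(n, k) :=
  \matrix_(j, i) (lab j == i)%:R.

Definition laplacian (n : nat) (A : 'M[R]_n) : 'M[R]_n :=
  diag_mx (\row_i \sum_j A i j) - A.

(* s is the list of eigenvalues of A (with multiplicity), sorted increasingly;
   so lambda_i(A) = s`_(i-1). *)
Definition sorted_spectrum (n : nat) (A : 'M[R]_n) (s : seq R) : Prop :=
  sorted <=%R s /\ char_poly A = \prod_(x <- s) ('X - x%:P).

Definition k_block_ideal (n k : nat) (L : 'M[R]_n) (lab : 'I_n -> 'I_k) : Prop :=
  forall s, sorted_spectrum L s ->
  exists V : 'M[R]_(n, k),
    [/\ V^T *m V = 1%:M,
        forall j : 'I_k, L *m col j V = s`_j *: col j V &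
        exists2 S : 'M[R]_k, S \in unitmx & V = partmx lab *m S].

End Defs.

(* Main.v *)
Require Import Defs.
From HB Require Import structures.
From mathcomp Require Import all_boot all_order all_algebra.
From mathcomp Require Import reals.
From mathcomp Require Import ring lra zify.
Set Implicit Arguments. Unset Strict Implicit. Unset Printing Implicit Defensive.
Import Order.TTheory GRing.Theory Num.Theory.
Local Open Scope ring_scope.

Section Spec.
Variable R : realType.

Definition dotv p (x y : 'cV[R]_p) : R := \sum_i x i 0 * y i 0.

Lemma dotE p (x y : 'cV[R]_p) : x^T *m y = (dotv x y)%:M.
Proof.
apply/matrixP => i j; rewrite !ord1 !mxE /dotv; apply: eq_bigr => l _.
by rewrite !mxE.
Qed.

Lemma dotvC p (x y : 'cV[R]_p) : dotv x y = dotv y x.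
Proof. by apply: eq_bigr => i _; rewrite mulrC. Qed.

Lemma dotvDl p (x y z : 'cV[R]_p) : dotv (x + y) z = dotv x z + dotv y z.
Proof. by rewrite /dotv -big_split; apply: eq_bigr => i _; rewrite !mxE mulrDl. Qed.

Lemma dotvNl p (x z : 'cV[R]_p) : dotv (- x) z = - dotv x z.
Proof. by rewrite /dotv -sumrN; apply: eq_bigr => i _; rewrite !mxE mulNr. Qed.

Lemma dotvBl p (x y z : 'cV[R]_p) : dotv (x - y) z = dotv x z - dotv y z.
Proof. by rewrite dotvDl dotvNl. Qed.

Lemma dotvBr p (x y z : 'cV[R]_p) : dotv z (x - y) = dotv z x - dotv z y.
Proof. by rewrite dotvC dotvBl !(dotvC z). Qed.

Lemma dotv_e p (x : 'cV[R]_p.+1) : dotv x (delta_mx 0 0) = x 0 0.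
Proof.
rewrite /dotv (bigD1 ord0) //= !mxE eqxx mulr1 big1 ?addr0 // => i ni0.
by rewrite !mxE (negbTE ni0) mulr0.
Qed.

Lemma dotv_ge0 p (x : 'cV[R]_p) : 0 <= dotv x x.
Proof. by apply: sumr_ge0 => i _; rewrite -expr2 sqr_ge0. Qed.

Lemma dotv_eq0 p (x : 'cV[R]_p) : dotv x x = 0 -> x = 0.
Proof.
move=> /eqP; rewrite psumr_eq0 => [/allP H|i _]; last by rewrite -expr2 sqr_ge0.
apply/matrixP => i j; rewrite ord1 mxE.
have := H i (mem_index_enum _); rewrite /= mulf_eq0 orbb.
by move/eqP.
Qed.

Lemma householder m (w : 'cV[R]_m.+1) : w^T *m w = 1%:M ->
  exists H : 'M[R]_m.+1, [/\ H^T = H, H *m H = 1%:M & H *m delta_mx 0 0 = w].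
Proof.
set e : 'cV[R]_m.+1 := delta_mx 0 0.
move=> ww.
have ww1 : dotv w w = 1.
  by move: ww; rewrite dotE => /matrixP/(_ 0 0); rewrite !mxE !eqxx !mulr1n.
case: (eqVneq w e) => [-> | wne].
  by exists 1%:M; rewrite trmx1 !mul1mx.
set z := w - e.
have ee : dotv e e = 1 by rewrite /e dotv_e mxE.
have q_eq : dotv z z = 2 - 2 * w 0 0.
  rewrite /z dotvBl !dotvBr ww1 ee (dotvC e w) /e dotv_e; ring.
have zz : z^T *m z = (dotv z z)%:M by rewrite dotE.
have qn0 : dotv z z != 0.
  apply/eqP => /dotv_eq0 /eqP; rewrite subr_eq0 => /eqP; exact/eqP.
set q := dotv z z in q_eq zz qn0.
exists (1%:M - (2 / q) *: (z *m z^T)); split.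
- by rewrite linearB /= linearZ /= trmx1 trmx_mul trmxK.
- rewrite mulmxBl mul1mx mulmxBr mulmx1 -!scalemxAl -!scalemxAr mulmxA.
  have ZZ : z *m z^T *m z *m z^T = q *: (z *m z^T).
    by rewrite -(mulmxA (z *m z^T)) -(mulmxA z) (mulmxA z^T) zz mul_scalar_mx scalemxAr.
  rewrite ZZ scalerA scalerA.
  have -> : 2 / q * (2 / q) * q = 2 / q + 2 / q by field.
  by rewrite scalerDl opprB addrK subrK.
- rewrite mulmxBl mul1mx -scalemxAl -mulmxA dotE.
  have -> : dotv z e = w 0 0 - 1 by rewrite /z dotvBl ee /e dotv_e.
  rewrite mul_mx_scalar scalerA.
  have -> : 2 / q * (w 0 0 - 1) = -1.
    by move: qn0; rewrite q_eq => qn0; field.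
  by rewrite scaleN1r opprK /z addrC subrK.
Qed.

Lemma dotvZ p (c : R) (x : 'cV[R]_p) : dotv (c *: x) (c *: x) = c ^+ 2 * dotv x x.
Proof.
rewrite /dotv mulr_sumr; apply: eq_bigr => i _; rewrite !mxE; ring.
Qed.

Lemma char_poly_conj m (H A : 'M[R]_m) : H *m H = 1%:M ->
  char_poly (H *m A *m H) = char_poly A.
Proof.
move=> HH.
have E : char_poly_mx (H *m A *m H) =
    map_mx polyC H *m char_poly_mx A *m map_mx polyC H.
  rewrite /char_poly_mx mulmxBr mulmxBl mul_mx_scalar -scalemxAl -map_mxM HH.
  by rewrite map_mx1 scalemx1 -!map_mxM.
rewrite /char_poly E !det_mulmx mulrC mulrA -det_mulmx -map_mxM HH map_mx1 det1.
by rewrite mul1r.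
Qed.

Lemma col_scale m n (j : 'I_n) (c : R) (M : 'M[R]_(m, n)) :
  col j (c *: M) = c *: col j M.
Proof. by apply/matrixP => a b; rewrite !mxE. Qed.

Lemma col0 p q (j : 'I_q) : col j (0 : 'M[R]_(p, q)) = 0.
Proof. by apply/matrixP => a b; rewrite !mxE. Qed.

Lemma spectral m (A : 'M[R]_m) (s : seq R) : A^T = A ->
  char_poly A = \prod_(x <- s) ('X - x%:P) ->
  exists U : 'M[R]_m, U^T *m U = 1%:M /\
    forall j : 'I_m, A *m col j U = s`_j *: col j U.
Proof.
elim: m A s => [|m IH] A s symA cp.
  by exists 1%:M; split; [apply/matrixP => [[]] | case].
have := congr1 (fun p : {poly R} => size p) cp; rewrite /= size_char_poly size_prod_XsubC.
case: s cp => [|x0 s'] // cp _.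
have : root (char_poly A) x0 by rewrite cp root_prod_XsubC mem_head.
rewrite -eigenvalue_root_char => /eigenvalueP [v vA vn0].
set y := v^T.
have Ay : A *m y = x0 *: y by rewrite /y -{1}symA -trmx_mul vA linearZ.
have yn0 : dotv y y != 0.
  apply/eqP => /dotv_eq0 y0; move: vn0; rewrite -(trmxK v) -/y y0 trmx0.
  by rewrite eqxx.
have ypos : 0 < dotv y y by rewrite lt_def yn0 dotv_ge0.
set w := (Num.sqrt (dotv y y))^-1 *: y.
have ww : w^T *m w = 1%:M.
  rewrite dotE /w dotvZ exprVn sqr_sqrtr ?dotv_ge0 // mulVf //.
have Aw : A *m w = x0 *: w by rewrite /w -scalemxAr Ay !scalerA mulrC.
have [H [Hsym HH He]] := householder ww.
set A' := H *m A *m H.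
have A'sym : A'^T = A' by rewrite /A' !trmx_mul Hsym symA mulmxA.
have A'e : A' *m (delta_mx 0 0 : 'cV[R]_m.+1) = x0 *: delta_mx 0 0.
  by rewrite /A' -(mulmxA (H *m A)) He -mulmxA Aw -scalemxAr -{1}He mulmxA HH mul1mx.
have A'col : forall i, A' i 0 = x0 * ((i : nat) == 0%N)%:R.
  move=> i; have := congr1 (fun M : 'cV[R]_m.+1 => M i 0) A'e.
  by rewrite -colE !mxE eqxx andbT => ->.
have A'col' : forall i j : 'I_m.+1, val j = 0%N -> A' i j = x0 * ((i : nat) == 0%N)%:R.
  by move=> i j j0; rewrite (_ : j = 0) ?A'col //; apply: val_inj.
have A'def : A' = H *m A *m H by [].
clearbody A'.
set A1 := drsubmx (A' : 'M_(1 + m)).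
have A'blk : (A' : 'M_(1 + m)) = block_mx (x0%:M : 'M_1) 0 0 A1.
  rewrite -[A' in LHS](submxK (A' : 'M_(1 + m))); congr block_mx.
  - by apply/matrixP => a b; rewrite !ord1 !mxE A'col' //= mulr1.
  - by apply/matrixP => a b; rewrite !ord1 !mxE -A'sym mxE A'col' //= mulr0.
  - by apply/matrixP => a b; rewrite !ord1 !mxE A'col' //= mulr0.
have sym1 : A1^T = A1.
  by apply/matrixP => a b; rewrite !mxE -{1}A'sym mxE.
have cp1 : char_poly A1 = \prod_(x <- s') ('X - x%:P).
  have : char_poly (A' : 'M_(1 + m)) = ('X - x0%:P) * char_poly A1.
    rewrite A'blk /char_poly char_block_diag_mx det_ublock det_mx11 !mxE.
    by rewrite mulr1n eqxx mulr1n.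
  rewrite A'def char_poly_conj // cp big_cons => E; apply/esym/(mulfI _ E).
  by rewrite polyXsubC_eq0.
have [U1 [U1U1 U1e]] := IH A1 s' sym1 cp1.
exists (H *m (block_mx 1%:M 0 0 U1 : 'M_(1 + m))); split.
  rewrite trmx_mul Hsym -mulmxA (mulmxA H) HH mul1mx.
  have BB : forall (B : 'M[R]_(1 + m)), B = block_mx 1%:M 0 0 U1 -> B^T *m B = 1%:M.
    move=> B ->; rewrite tr_block_mx mulmx_block.
  rewrite !trmx0 trmx1 !mul1mx !mulmx0 !mul0mx !addr0 !add0r U1U1.
    by rewrite -scalar_mx_block.
  exact: BB.
set Bk := (block_mx 1%:M 0 0 U1 : 'M_(1 + m)).
have key : forall j : 'I_(1 + m), (A' : 'M_(1 + m)) *m col j Bk = (x0 :: s')`_j *: col j Bk.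
  move=> j; rewrite A'blk /Bk [block_mx 1%:M _ _ _]block_mxEh -(splitK j).
  case: (split j) => [j0|j1] /=.
    rewrite !colKl !col_col_mx mul_block_col !mul0mx !addr0 mul_scalar_mx scale_col_mx.
    by rewrite ord1 /= col0 mulmx0 add0r scaler0.
  rewrite !colKr !col_col_mx mul_block_col !mul0mx !add0r col0 mulmx0 add0r U1e.
  by rewrite scale_col_mx scaler0.
move=> j.
have AH : A *m H = H *m A' by rewrite A'def !mulmxA HH mul1mx.
rewrite !colE -!mulmxA mulmxA AH -mulmxA scalemxAr; congr (H *m _).
rewrite -!colE; exact: (key j).
Qed.
End Spec.

Section Gersh.
Variable R : realType.

Lemma gersh k (y c : 'I_k -> R) (g : 'I_k -> 'I_k -> R) (lam : R) i0 :
  y i0 != 0 -> (forall i l, 0 <= g i l) ->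
  (forall i, (c i - lam) * y i = \sum_l g i l * y l) ->
  exists i, lam <= c i - g i i + \sum_(l | l != i) g i l.
Proof.
move=> y0 g0 eq.
case: (@arg_maxP _ _ _ i0 xpredT (fun i => `|y i|) isT) => i _ Hi.
exists i.
have yi : 0 < `|y i|.
  by apply: lt_le_trans (Hi i0 isT); rewrite normr_gt0.
have := eq i; rewrite (bigD1 i) //= => E.
have E2 : (c i - g i i - lam) * y i = \sum_(l | l != i) g i l * y l.
  by rewrite -[RHS](addKr (g i i * y i)) -E; ring.
have H1 : `|c i - g i i - lam| * `|y i| <= (\sum_(l | l != i) g i l) * `|y i|.
  rewrite -normrM E2 mulr_suml; apply: le_trans (ler_norm_sum _ _ _) _.
  apply: ler_sum => l _; rewrite normrM ger0_norm //.
  by apply: ler_wpM2l => //; exact: Hi.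
rewrite ler_pM2r // in H1.
have := ler_norm (lam - (c i - g i i)); rewrite distrC.
have -> : c i - g i i - lam = c i - g i i - lam by [].
move=> H2; have := le_trans H2 H1. lra.
Qed.
End Gersh.

Section Main.
Variables (R : realType) (n k : nat) (lab : 'I_n -> 'I_k) (B : 'M[R]_k).
Variable rep : 'I_k -> 'I_n.
Hypothesis repK : forall i, lab (rep i) = i.
Hypothesis Bge0 : forall i j, 0 <= B i j.

Definition szf i : R := (#|block lab i|)%:R.
Definition a' i := \sum_l B i l * szf l.
Definition Lm : 'M[R]_n :=
  \matrix_(j, l) ((j == l)%:R * a' (lab j) - B (lab j) (lab l)).
Definition Xs (x : 'cV[R]_n) i := \sum_(l | lab l == i) x l 0.

Lemma sum_const_block i (c : R) : \sum_(l | lab l == i) c = szf i * c.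
Proof.
rewrite (eq_bigl (fun l => l \in block lab i)) => [|l]; last by rewrite inE.
by rewrite sumr_const mulr_natl.
Qed.

Lemma sum_lab (F : 'I_k -> R) : \sum_l F (lab l) = \sum_i szf i * F i.
Proof.
rewrite (partition_big lab xpredT) //=; apply: eq_bigr => i _.
rewrite -sum_const_block; apply: eq_bigr => l /eqP -> //.
Qed.

Lemma sum_lab2 (F : 'I_k -> R) (x : 'cV[R]_n) :
  \sum_l F (lab l) * x l 0 = \sum_i F i * Xs x i.
Proof.
rewrite (partition_big lab xpredT) //=; apply: eq_bigr => i _.
by rewrite /Xs mulr_sumr; apply: eq_bigr => l /eqP ->.
Qed.

Lemma sum_delta (j : 'I_n) (F : 'I_n -> R) : \sum_l (j == l)%:R * F l = F j.
Proof.
rewrite (bigD1 j) //= eqxx mul1r big1 ?addr0 // => l /negbTE.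
by rewrite eq_sym => ->; rewrite mul0r.
Qed.

Lemma eig_entry (x : 'cV[R]_n) lam : Lm *m x = lam *: x ->
  forall j, a' (lab j) * x j 0 - \sum_i B (lab j) i * Xs x i = lam * x j 0.
Proof.
move=> E j; have := congr1 (fun M : 'cV[R]_n => M j 0) E; rewrite !mxE => <-.
rewrite (eq_bigr (fun l => (j == l)%:R * (a' (lab j) * x l 0)
   - B (lab j) (lab l) * x l 0)); last by move=> l _; rewrite !mxE; ring.
by rewrite sumrB sum_delta sum_lab2.
Qed.

Lemma E1 (x : 'cV[R]_n) lam : Lm *m x = lam *: x -> (forall i, lam < a' i) ->
  forall j l, lab j = lab l -> x j 0 = x l 0.
Proof.
move=> E lt j l jl.
have h : forall j, x j 0 = (\sum_i B (lab j) i * Xs x i) / (a' (lab j) - lam).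
  move=> j'; have := eig_entry E j'; have := lt (lab j').
  move=> ltj e.
  have dn0 : a' (lab j') - lam != 0 by rewrite subr_eq0 gt_eqF.
  by apply: (mulIf dn0); rewrite divfK //; lra.
by rewrite !h jl.
Qed.

Lemma blocksum (x : 'cV[R]_n) lam : Lm *m x = lam *: x ->
  forall i, (a' i - lam) * Xs x i = \sum_l (szf i * B i l) * Xs x l.
Proof.
move=> E i.
have : \sum_(l | lab l == i) (a' (lab l) * x l 0 - \sum_i' B (lab l) i' * Xs x i')
   = \sum_(l | lab l == i) lam * x l 0 by apply: eq_bigr => l _; exact: eig_entry.
rewrite (eq_bigr (fun l => a' i * x l 0 - \sum_i' B i i' * Xs x i')); last first.
  by move=> l /eqP ->.
rewrite sumrB sum_const_block -!mulr_sumr -/(Xs x i) => e.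
have -> : \sum_l szf i * B i l * Xs x l = szf i * \sum_l B i l * Xs x l.
  by rewrite mulr_sumr; apply: eq_bigr => l _; rewrite mulrA.
move: e; set S := \sum_l B i l * Xs x l; set X := Xs x i => e; rewrite mulrBl -e; ring.
Qed.

Lemma E3 (x : 'cV[R]_n) lam T :
  (forall i, \sum_(l | l != i) B i l * szf l + \sum_(l | l != i) szf i * B i l <= T) ->
  T < lam -> Lm *m x = lam *: x -> forall i, Xs x i = 0.
Proof.
move=> HT Tl E i0; apply/eqP/negPn/negP => ne.
have [|i] := gersh (c := a') (g := fun i l => szf i * B i l) ne _ (blocksum E).
  by move=> i l; apply: mulr_ge0 => //; rewrite /szf ler0n.
have -> : a' i - szf i * B i i = \sum_(l | l != i) B i l * szf l.
  by rewrite /a' (bigD1 i) //= mulrC addrC addrK.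
by have := HT i; lra.
Qed.

Lemma sum_delta_k (j : 'I_n) (F : 'I_k -> R) : \sum_i (lab j == i)%:R * F i = F (lab j).
Proof.
rewrite (bigD1 (lab j)) //= eqxx mul1r big1 ?addr0 // => l /negbTE.
by rewrite eq_sym => ->; rewrite mul0r.
Qed.

Lemma PA p (Y : 'M[R]_(n, p)) : (forall j l c, lab j = lab l -> Y j c = Y l c) ->
  Y = partmx R lab *m \matrix_(i, c) Y (rep i) c.
Proof.
move=> bc; apply/matrixP => j c; rewrite !mxE.
rewrite (eq_bigr (fun i => (lab j == i)%:R * Y (rep i) c)); last first.
  by move=> i _; rewrite !mxE.
by rewrite sum_delta_k; apply: bc; rewrite repK.
Qed.

Lemma rank_blockconst p (Y : 'M[R]_(n, p)) : Y^T *m Y = 1%:M ->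
  (forall j l c, lab j = lab l -> Y j c = Y l c) -> (p <= k)%N.
Proof.
move=> YY bc.
have e : Y^T *m Y = (Y^T *m partmx R lab) *m \matrix_(i, c) Y (rep i) c.
  by rewrite -mulmxA -PA.
rewrite -(mxrank1 R p) -YY e.
exact: leq_trans (mxrankM_maxr _ _) (rank_leq_row _).
Qed.

Lemma PT_rank : \rank (partmx R lab)^T = k.
Proof.
apply/eqP; rewrite eqn_leq rank_leq_row /=.
set S0 : 'M[R]_(n, k) := \matrix_(j, i) (j == rep i)%:R.
have e : (partmx R lab)^T *m S0 = 1%:M.
  apply/matrixP => i i'; rewrite !mxE (bigD1 (rep i')) //= big1.
    by rewrite !mxE eqxx repK mulr1 addr0 eq_sym.
  by move=> j /negbTE jn; rewrite !mxE jn mulr0.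
by rewrite -{1}(mxrank1 R k) -e mxrankM_maxl.
Qed.

Lemma rank_perp p (Y : 'M[R]_(n, p)) : Y^T *m Y = 1%:M ->
  (partmx R lab)^T *m Y = 0 -> (p + k <= n)%N.
Proof.
move=> YY PY.
have rY : \rank Y = p.
  apply/eqP; rewrite eqn_leq rank_leq_col /=.
  by rewrite -{1}(mxrank1 R p) -YY mxrankM_maxr.
have sub : ((partmx R lab)^T <= kermx Y)%MS by apply/sub_kermxP.
have := mxrankS sub; rewrite mxrank_ker PT_rank rY.
have := rank_leq_row Y; rewrite rY; lia.
Qed.
End Main.

Section MinMax.
Variable R : realType.

Lemma foldr_min_le (h : R) s x : x \in s -> foldr Num.min h s <= x.
Proof.
elim: s => //= a s IH; rewrite inE => /orP [/eqP ->|xs]; first by rewrite ge_min lexx.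
by rewrite ge_min IH ?orbT.
Qed.

Lemma foldr_min_in (h : R) s : foldr Num.min h s \in h :: s.
Proof.
elim: s => [|a s IH] /=; first by rewrite inE.
rewrite /Num.min; case: ifP => _; first by rewrite !inE eqxx orbT.
move: IH; rewrite !inE => /orP [->|->] //; by rewrite !orbT.
Qed.

Lemma foldr_max_ge (h : R) s x : x \in s -> x <= foldr Num.max h s.
Proof.
elim: s => //= a s IH; rewrite inE => /orP [/eqP ->|xs]; first by rewrite le_max lexx.
by rewrite le_max IH ?orbT.
Qed.

Lemma ordmin_le k (f : 'I_k -> R) i : ordmin f <= f i.
Proof. by apply: foldr_min_le; apply: map_f; rewrite mem_enum. Qed.

Lemma ordmax_ge k (f : 'I_k -> R) i : f i <= ordmax f.
Proof. by apply: foldr_max_ge; apply: map_f; rewrite mem_enum. Qed.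

Lemma ordmin_ex k (f : 'I_k -> R) : (0 < k)%N -> exists i, ordmin f = f i.
Proof.
move=> k0; rewrite /ordmin /seqmin.
set s := [seq f i | i <- enum 'I_k].
have hs : head 0 s \in s.
  rewrite /s; case e: (enum 'I_k) => [|a l] /=; last by rewrite inE eqxx.
  by move: (congr1 size e); rewrite size_enum_ord /=; case: k k0 {f s e}.
have : foldr Num.min (head 0 s) s \in s.
  by move: (foldr_min_in (head 0 s) s); rewrite inE => /orP [/eqP ->|].
by case/mapP => i _ ->; exists i.
Qed.
End MinMax.

Theorem lemma9 (R : realType) (n k : nat) (lab : 'I_n -> 'I_k)
  (Q W : 'M[R]_k) (rho Delta : R) :
  (k < n)%N ->
  (forall i : 'I_k, exists j : 'I_n, lab j = i) ->
  Q^T = Q -> W^T = W ->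
  (forall i j, 0 <= Q i j <= 1) -> (forall i j, 0 <= W i j) ->
  let B := map2_mx (fun q w => q * w) Q W in
  let sz := fun i : 'I_k => (#|block lab i|)%:R : R in
  1 <= rho -> 0 < Delta ->
  ordmax sz / ordmin sz <= rho ->
  ordmin (fun i => B i i)
    - 2 * rho * ordmax (fun i => \sum_(j < k | j != i) B i j) >= Delta ->
  let P := partmx R lab in
  let Ablk := P *m B *m P^T in
  let Lblk := laplacian Ablk in
  let nmin := ordmin sz in
  let bmin := ordmin (fun i => \sum_j B i j) in
  k_block_ideal Lblk lab /\
  (forall s, sorted_spectrum Lblk s ->
     s`_k >= bmin * nmin /\ s`_k - s`_k.-1 >= Delta * nmin).
Proof.
move=> kn surj QT WT Q01 W0 B sz rho1 D0 Hrho Hgap P Ablk Lblk nmin bmin.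
have k0 : (0 < k)%N.
  case: (lab (Ordinal (leq_ltn_trans (leq0n k) kn))) => i ik.
  exact: leq_ltn_trans (leq0n i) ik.
have surj' : forall i, exists j, lab j == i.
  by move=> i; have [j e] := surj i; exists j; apply/eqP.
pose rep i := xchoose (surj' i).
have repK : forall i, lab (rep i) = i by move=> i; apply/eqP; exact: xchooseP (surj' i).
have Bge0 : forall i j, 0 <= B i j.
  by move=> i j; rewrite /B mxE; apply: mulr_ge0; [case/andP: (Q01 i j) | exact: W0].
have Bsym : forall i j, B i j = B j i.
  by move=> i j; rewrite /B !mxE -{1}QT -{1}WT !mxE.
clearbody B.
have sz_gt0 : forall i, 0 < sz i.
  move=> i; rewrite /sz ltr0n card_gt0; apply/set0Pn; exists (rep i).
  by rewrite inE repK.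
have nmin_gt0 : 0 < nmin by rewrite /nmin; have [i ->] := ordmin_ex sz k0.
have szle : forall i, sz i <= rho * nmin.
  move=> i; apply: le_trans (ordmax_ge sz i) _.
  by rewrite -ler_pdivrMr.
have PB : forall j i', (P *m B) j i' = B (lab j) i'.
  move=> j i'; rewrite mxE -(sum_delta_k lab j (fun i => B i i')).
  by apply: eq_bigr => i _; rewrite /P mxE.
have AE : forall j l, Ablk j l = B (lab j) (lab l).
  move=> j l; rewrite /Ablk mxE.
  rewrite (eq_bigr (fun i => (lab l == i)%:R * B (lab j) i)).
    by rewrite sum_delta_k.
  by move=> i _; rewrite PB /P !mxE mulrC.
have LblkE : Lblk = laplacian Ablk by [].
clearbody Lblk Ablk.
have LE : Lblk = Lm lab B.
  have AE' : Ablk = \matrix_(j, l) B (lab j) (lab l).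
    by apply/matrixP => j l; rewrite AE mxE.
  rewrite LblkE /laplacian AE'; apply/matrixP => j l; rewrite !mxE.
  rewrite (eq_bigr (fun l' => B (lab j) (lab l'))); last by move=> l' _; rewrite mxE.
  rewrite sum_lab mulr_natl; congr (_ *+ _ - _).
  by rewrite /a'; apply: eq_bigr => i _; rewrite mulrC.
set off := fun i => \sum_(j < k | j != i) B i j.
set t0 := 2 * rho * ordmax off * nmin.
set t1 := ordmin (fun i => B i i) * nmin.
have t01 : t0 + Delta * nmin <= t1.
  have := ler_wpM2r (ltW nmin_gt0) Hgap; rewrite mulrBl /t0 /t1; lra.
have szf_ge0 : forall i, 0 <= szf R lab i by move=> i; rewrite /szf ler0n.
have aLow : forall i, t1 <= a' lab B i /\ bmin * nmin <= a' lab B i.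
  move=> i; split.
    apply: (@le_trans _ _ (B i i * sz i)).
      apply: (@le_trans _ _ (B i i * nmin)).
        by apply: ler_wpM2r; [exact: ltW | exact: ordmin_le].
      by apply: ler_wpM2l => //; exact: ordmin_le.
    rewrite /a' (bigD1 i) //= lerDl; apply: sumr_ge0 => l _.
    exact: mulr_ge0.
  apply: (@le_trans _ _ ((\sum_j B i j) * nmin)).
    by apply: ler_wpM2r; [exact: ltW | exact: (ordmin_le (fun i => \sum_j B i j))].
  rewrite mulr_suml; apply: ler_sum => l _; apply: ler_wpM2l => //.
  exact: ordmin_le.
have HT : forall i, \sum_(l | l != i) B i l * szf R lab l
    + \sum_(l | l != i) szf R lab i * B i l <= t0.
  move=> i.
  have h1 : \sum_(l | l != i) B i l * szf R lab l <= off i * (rho * nmin).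
    rewrite /off mulr_suml; apply: ler_sum => l _; apply: ler_wpM2l => //.
  have h2 : \sum_(l | l != i) szf R lab i * B i l <= off i * (rho * nmin).
    rewrite /off mulr_suml; apply: ler_sum => l _; rewrite mulrC.
    by apply: ler_wpM2l => //.
  have h3 : off i * (rho * nmin) <= ordmax off * (rho * nmin).
    apply: ler_wpM2r; last exact: ordmax_ge.
    by apply: mulr_ge0; [lra | exact: ltW].
  rewrite /t0; lra.
have t0a : forall i, t0 < a' lab B i.
  move=> i; have [h _] := aLow i; have : 0 < Delta * nmin by apply: mulr_gt0.
  lra.
have core : forall s, sorted_spectrum Lblk s -> exists U : 'M[R]_n,
    [/\ U^T *m U = 1%:M, forall j : 'I_n, Lblk *m col j U = s`_j *: col j U,
        s`_k.-1 <= t0, t1 <= s`_k & bmin * nmin <= s`_k].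
  move=> s [srt cp].
  have symL : Lblk^T = Lblk.
    rewrite LE; apply/matrixP => j l; rewrite !mxE Bsym.
    by case: (eqVneq j l) => [->|ne] //; rewrite !mul0r.
  have [U [UU Ue]] := spectral symL cp.
  have sz_s : size s = n.
    have := congr1 (fun p : {poly R} => size p) cp.
    by rewrite /= size_char_poly size_prod_XsubC => -[].
  have ucol : forall j, Lm lab B *m col j U = s`_j *: col j U by move=> j; rewrite -LE.
  have nz : forall j : 'I_n, exists l, col j U l 0 != 0.
    move=> j; case: (boolP [exists l, col j U l 0 != 0]) => [/existsP //|].
    rewrite negb_exists => /forallP h.
    have := congr1 (fun M : 'M[R]_n => M j j) UU; rewrite !mxE eqxx big1 //.
      by move/eqP; rewrite eq_sym oner_eq0.
    by move=> l _; move/negPn/eqP: (h l); rewrite !mxE => ->; rewrite mulr0.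
  have srt_le : forall i j, (i <= j)%N -> (j < n)%N -> s`_i <= s`_j.
    move=> i j ij jn; apply: (sorted_leq_nth le_trans lexx 0 srt) => //;
      rewrite inE sz_s //; exact: leq_ltn_trans ij jn.
  have skA : t0 < s`_k.
    rewrite ltNge; apply/negP => sk.
    pose Y : 'M[R]_(n, k.+1) := \matrix_(j, c) U j (widen_ord kn c).
    have YY : Y^T *m Y = 1%:M.
      apply/matrixP => c c'.
      have := congr1 (fun M : 'M[R]_n => M (widen_ord kn c) (widen_ord kn c')) UU.
      rewrite !mxE => <-; apply: eq_bigr => l _; rewrite !mxE //.
    have bc : forall j l c, lab j = lab l -> Y j c = Y l c.
      move=> j l c jl; rewrite !mxE.
      have := E1 (ucol (widen_ord kn c)) _ jl; rewrite !mxE; apply.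
      move=> i; apply: le_lt_trans (t0a i); apply: le_trans sk.
      by apply: srt_le => //=; rewrite -ltnS.
    by have := rank_blockconst repK YY bc; rewrite ltnn.
  have sk1 : s`_k.-1 <= t0.
    rewrite leNgt; apply/negP => sk.
    have pf : forall c : 'I_(n - k).+1, (k.-1 + c < n)%N.
      by move=> [c hc] /=; lia.
    pose Y : 'M[R]_(n, (n - k).+1) := \matrix_(j, c) U j (Ordinal (pf c)).
    have YY : Y^T *m Y = 1%:M.
      apply/matrixP => c c'.
      have := congr1 (fun M : 'M[R]_n => M (Ordinal (pf c)) (Ordinal (pf c'))) UU.
      rewrite !mxE => e; rewrite (_ : (c == c') = (Ordinal (pf c) == Ordinal (pf c'))).
        by rewrite -e; apply: eq_bigr => l _; rewrite !mxE.
      by apply/eqP/eqP => [->//|[] /addnI /val_inj].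
    have PY : (partmx R lab)^T *m Y = 0.
      apply/matrixP => i c; rewrite !mxE.
      have h : Xs lab (col (Ordinal (pf c)) U) i = 0.
        apply: (E3 Bge0 HT _ (ucol _)).
        by apply: lt_le_trans sk _; apply: srt_le => //=; exact: leq_addr.
      rewrite -[RHS]h /Xs [RHS]big_mkcond /=; apply: eq_bigr => j _; rewrite !mxE.
      by case: (lab j == i); rewrite ?mul1r ?mul0r.
    have := rank_perp repK YY PY; lia.
  have [j nzj] := nz (Ordinal kn).
  have X0 := E3 Bge0 HT skA (ucol (Ordinal kn)).
  have := eig_entry (ucol (Ordinal kn)) j.
  rewrite big1 ?subr0 => [e|i _]; last by rewrite X0 mulr0.
  have ska : s`_k = a' lab B (lab j) by apply: (mulIf nzj); rewrite -e.
  have [h1 h2] := aLow (lab j).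
  by exists U; split => //; rewrite ska.
split; last first.
  move=> s ss; have [U [_ _ sk1 h1 h2]] := core s ss; split => //.
  by move: t01 sk1 h1; lra.
move=> s ss; have [U [UU Ue sk1 _ _]] := core s ss.
have kn' : (k <= n)%N := ltnW kn.
pose V : 'M[R]_(n, k) := \matrix_(j, c) U j (widen_ord kn' c).
have VV : V^T *m V = 1%:M.
  apply/matrixP => c c'.
  have := congr1 (fun M : 'M[R]_n => M (widen_ord kn' c) (widen_ord kn' c')) UU.
  rewrite !mxE => <-; apply: eq_bigr => l _; rewrite !mxE //.
have colV : forall c, col c V = col (widen_ord kn' c) U.
  by move=> c; apply/matrixP => a b; rewrite !mxE.
have bc : forall j l c, lab j = lab l -> V j c = V l c.
  move=> j l c jl; rewrite !mxE.
  have ucol : Lm lab B *m col (widen_ord kn' c) U = s`_c *: col (widen_ord kn' c) U.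
    by rewrite -LE Ue.
  have := E1 ucol _ jl; rewrite !mxE; apply.
  move=> i; apply: le_lt_trans (t0a i); apply: le_trans sk1.
  have [srt cp] := ss.
  have sz_s : size s = n.
    have := congr1 (fun p : {poly R} => size p) cp.
    by rewrite /= size_char_poly size_prod_XsubC => -[].
  have := ltn_ord c.
  move=> cl; apply: (sorted_leq_nth le_trans lexx 0 srt); rewrite ?inE ?sz_s /=; lia.
exists V; split => //.
  by move=> c; rewrite colV Ue.
exists (\matrix_(i, c) V (rep i) c); last first.
  by apply: (PA repK); exact: bc.
have VPS := PA repK bc.
have : (V^T *m P) *m \matrix_(i, c) V (rep i) c = 1%:M by rewrite -mulmxA -VPS VV.
by case/mulmx1_unit.
Qed.
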